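(* Let $\xi_1,\xi_2,\dots$ be i.i.d. standard Gaussian random variables. There is a constant $c_1>0$ such that for all $L>0$ and all integers $N\ge1$ with $2L\le N$, $$-\log\mathbb{E}\,e^{-L\max_{i=1,\dots,N}|\xi_i|}\le c_1L\sqrt{\log(N/L)}.$$ Moreover, there is a constant $c_2>0$ such that for all $L\ge1$ and all integers $N\ge1$ with $2L\le N$, $$-\log\mathbb{E}\,e^{-L\max_{i=1,\dots,N}|\xi_i|}\ge c_2L\sqrt{\log(N/L)}.$$ *)

(* Defs.v *)
From HB Require Import structures.
From mathcomp Require Import all_boot all_order all_algebra.
From mathcomp Require Import all_classical all_reals all_analysis.
Set Implicit Arguments. Unset Strict Implicit. Unset Printing Implicit Defensive.
Import Order.TTheory GRing.Theory Num.Theory.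
Local Open Scope classical_set_scope.
Local Open Scope ring_scope.

Definition mutually_independent d (T : measurableType d) (R : realType)
    (P : probability T R) (X : nat -> {RV P >-> R}) : Prop :=
  forall (s : seq nat) (B : nat -> set R), uniq s ->
    (forall i, i \in s -> measurable (B i)) ->
    P (\big[setI/setT]_(i <- s) (X i @^-1` B i)) =
    (\prod_(i <- s) P (X i @^-1` B i))%E.

Definition standard_gaussian d (T : measurableType d) (R : realType)
    (P : probability T R) (X : {RV P >-> R}) : Prop :=
  forall A : set R, measurable A -> distribution P X A = normal_prob 0 1 A.

Definition iid_std_gaussian d (T : measurableType d) (R : realType)
    (P : probability T R) (X : nat -> {RV P >-> R}) : Prop :=
  mutually_independent X /\ forall i, standard_gaussian (X i).

Definition max_abs d (T : measurableType d) (R : realType)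
    (P : probability T R) (X : nat -> {RV P >-> R}) (N : nat) (w : T) : R :=
  \big[Num.max/0]_(i < N) `|X i w|.

(* Main.v *)
Require Import Defs.
From HB Require Import structures.
From mathcomp Require Import all_boot all_order all_algebra.
From mathcomp Require Import all_classical all_reals all_analysis.
From mathcomp Require Import ring lra.
Import Order.TTheory GRing.Theory Num.Theory.
Import measurable_realfun.
Local Open Scope ring_scope.

Local Close Scope ereal_scope.
Local Open Scope ring_scope.

Lemma pi_lt4 (R : realType) : pi < 4 :> R.
Proof. have := @pihalf_lt2 R. lra. Qed.

Lemma le_sqrt_l (R : realType) (a b : R) : 0 <= a -> a ^+ 2 <= b -> a <= Num.sqrt b.
Proof.
move=> a0 h; rewrite -[a in a <= _]ger0_norm // -sqrtr_sqr ler_sqrt //.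
exact: le_trans (sqr_ge0 a) h.
Qed.

Lemma le_sqrt_r (R : realType) (a b : R) : 0 <= a -> b <= a ^+ 2 -> Num.sqrt b <= a.
Proof.
move=> a0 h; rewrite -[a in _ <= a]ger0_norm // -sqrtr_sqr.
case: (leP 0 b) => b0; first by rewrite ler_sqrt // sqr_ge0.
by rewrite (ltr0_sqrtr b0) sqrtr_ge0.
Qed.

Lemma peak1_le (R : realType) : normal_peak (1:R) <= 2^-1.
Proof.
rewrite /normal_peak expr1n mul1r.
have h2 : (2:R) <= Num.sqrt (pi *+ 2).
  apply: le_sqrt_l => //. have := @pi_ge2 R. rewrite mulr2n. lra.
rewrite lef_pV2 // ?posrE //; lra.
Qed.

Lemma peak1_ge (R : realType) : 3^-1 <= normal_peak (1:R).
Proof.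
rewrite /normal_peak expr1n mul1r.
have hp : 0 < Num.sqrt (pi *+ 2 : R) by rewrite sqrtr_gt0 mulrn_wgt0 // pi_gt0.
have h2 : Num.sqrt (pi *+ 2) <= (3:R).
  apply: le_sqrt_r => //. have := @pi_lt4 R. rewrite mulr2n. lra.
rewrite lef_pV2 // ?posrE //; lra.
Qed.

Lemma peak2_ge (R : realType) : 4^-1 <= normal_peak (Num.sqrt 2 : R).
Proof.
rewrite /normal_peak sqr_sqrtr //.
have hp : 0 < Num.sqrt (2 * pi *+ 2 : R) by rewrite sqrtr_gt0 mulrn_wgt0 // mulr_gt0 // pi_gt0.
have h2 : Num.sqrt (2 * pi *+ 2) <= (4:R).
  apply: le_sqrt_r => //. have := @pi_lt4 R. rewrite mulr2n. lra.
rewrite lef_pV2 // ?posrE //; lra.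
Qed.

Lemma pdf1E (R : realType) (x : R) : normal_pdf 0 1 x = normal_peak 1 * expR (- (x ^+ 2) / 2).
Proof. by rewrite /normal_pdf oner_eq0 /normal_fun subr0 expr1n. Qed.

Lemma pdf2E (R : realType) (x : R) : normal_pdf 0 (Num.sqrt 2) x = normal_peak (Num.sqrt 2) * expR (- (x ^+ 2) / 4).
Proof.
rewrite /normal_pdf sqrtr_eq0 ifF; last by apply/negbTE; rewrite -ltNge.
rewrite /normal_fun subr0 sqr_sqrtr //. congr (_ * expR (_ / _)). by rewrite mulr2n; lra.
Qed.

Local Close Scope ereal_scope.
Local Open Scope ring_scope.

Definition At {R : realType} (t : R) : set R := [set x | `|x| <= t].

Lemma AtE (R : realType) (t : R) : At t = `[-t, t]%classic.
Proof.
apply/seteqP; split => x /=; rewrite /At /= in_itv /= ler_norml //.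
Qed.

Lemma measurable_At (R : realType) (t : R) : measurable (At t).
Proof. by rewrite AtE. Qed.

Local Open Scope ereal_scope.

Lemma G1 (R : realType) (t : R) : (0 <= t)%R -> normal_prob 0 1 (At t) <= t%:E.
Proof.
move=> t0.
rewrite /normal_prob.
apply: (@le_trans _ _ (\int[lebesgue_measure]_(x in At t) (cst (2^-1)%:E x))).
  apply: ge0_le_integral => //.
  - exact: measurable_At.
  - by move=> x _; rewrite lee_fin normal_pdf_ge0.
  - apply/measurable_realfun.measurable_EFinP; apply: measurable_funTS; exact: measurable_normal_pdf.
  - move=> x _; rewrite /= lee_fin pdf1E.
    have := peak1_le R; have := normal_peak_ge0 (1:R).
    have : (expR (- x ^+ 2 / 2) <= 1)%R.
      rewrite -[leRHS]expR0 ler_expR. have := sqr_ge0 x. lra.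
    have := expR_ge0 (- x ^+ 2 / 2). nra.
rewrite integral_cst; last exact: measurable_At.
have hm : lebesgue_measure ([set` `[- t, t]%R] : set R) = (t - - t)%:E.
  rewrite lebesgue_measure_itv /= lte_fin.
  case: ifP => //; rewrite ltNge => /negbFE h. congr EFin. lra.
rewrite AtE [X in _ * X](_ : _ = (t - - t)%:E); last exact: hm.
rewrite -EFinM lee_fin. lra.
Qed.

Lemma measurable_CAt (R : realType) (t : R) : measurable (~` At t).
Proof. apply: measurableC; exact: measurable_At. Qed.

Lemma G2 (R : realType) (t : R) : (0 <= t)%R ->
  normal_prob 0 1 (~` At t) <= (2 * expR (- (t ^+ 2) / 4))%:E.
Proof.
move=> t0.
set c := (2 * expR (- (t ^+ 2) / 4))%R.
have c0 : (0 <= c)%R by rewrite /c mulr_ge0 // expR_ge0.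
rewrite /normal_prob.
apply: (@le_trans _ _ (\int[lebesgue_measure]_(x in ~` At t) (c * normal_pdf 0 (Num.sqrt 2) x)%:E)).
  apply: ge0_le_integral => //.
  - exact: measurable_CAt.
  - by move=> x _; rewrite lee_fin normal_pdf_ge0.
  - apply/measurable_realfun.measurable_EFinP; apply: measurable_funTS; exact: measurable_normal_pdf.
  - apply/measurable_realfun.measurable_EFinP; apply: measurable_funTS.
    apply: measurable_funM => //; exact: measurable_normal_pdf.
  - move=> x /= hx; rewrite lee_fin pdf1E pdf2E /c.
    have hx2 : (t ^+ 2 <= x ^+ 2)%R.
      rewrite /At /= in hx; move/negP: hx; rewrite -ltNge => hx.
      have -> : (x ^+ 2 = `|x| ^+ 2 :> R)%R by rewrite real_normK // num_real.
      nra.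
    have -> : (- x ^+ 2 / 2 = - x ^+ 2 / 4 + - x ^+ 2 / 4 :> R)%R by lra.
    rewrite expRD.
    have ha : (expR (- x ^+ 2 / 4) <= expR (- t ^+ 2 / 4))%R by rewrite ler_expR; lra.
    have := peak1_le R; have := peak2_ge R; have := normal_peak_ge0 (1:R).
    have := expR_ge0 (- x ^+ 2 / 4).
    move: ha. set a := expR (- x ^+ 2 / 4). set b := expR (- t ^+ 2 / 4).
    move=> ha a0 p0 p2 p1.
    have hab : (a * a <= b * a)%R by apply: ler_wpM2r.
    nra.
under eq_integral do rewrite EFinM.
rewrite ge0_integralZl_EFin //.
- rewrite -[leRHS]mule1 lee_pmul2l //; last by rewrite lte_fin /c mulr_gt0 // expR_gt0.
  have := @probability_le1 _ _ R (normal_prob (0:R) (Num.sqrt 2)) _ (@measurable_CAt R t).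
  by rewrite /normal_prob.
- exact: measurable_CAt.
- by move=> x _; rewrite lee_fin normal_pdf_ge0.
- apply/measurable_realfun.measurable_EFinP; apply: measurable_funTS; exact: measurable_normal_pdf.
Qed.

Lemma G3 (R : realType) (t : R) : (0 <= t)%R ->
  (3^-1 * expR (- ((t + 1) ^+ 2) / 2))%:E <= normal_prob 0 1 (~` At t).
Proof.
move=> t0.
set c := (3^-1 * expR (- ((t + 1) ^+ 2) / 2))%R.
have sub : (([set` `]t, t + 1]%R] : set R) `<=` ~` At t)%classic.
  move=> x /=; rewrite in_itv /= /At /= => /andP[h1 h2] h3.
  have := ler_norm x. lra.
apply: (@le_trans _ _ (normal_prob 0 1 ([set` `]t, t + 1]%R] : set R))); last first.
  apply: le_measure => //; rewrite inE //; exact: measurable_CAt.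
have hm : lebesgue_measure ([set` `]t, t + 1]%R] : set R) = 1%:E.
  rewrite lebesgue_measure_itv /= lte_fin ltrDl ltr01 /=. congr EFin. lra.
apply: (@le_trans _ _ (\int[lebesgue_measure]_(x in ([set` `]t, t + 1]%R] : set R)) (cst c%:E x))).
  rewrite integral_cst //. rewrite [X in _ * X](_ : _ = 1%:E); last exact: hm.
  by rewrite mule1.
rewrite /normal_prob.
apply: ge0_le_integral => //.
- by move=> x _; rewrite lee_fin /c mulr_ge0 // expR_ge0.
- apply/measurable_realfun.measurable_EFinP; apply: measurable_funTS; exact: measurable_normal_pdf.
- move=> x /=; rewrite in_itv /= => /andP[h1 h2].
  rewrite lee_fin pdf1E /c.
  have hx : (- ((t + 1) ^+ 2) / 2 <= - x ^+ 2 / 2)%R by nra.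
  have := peak1_ge R. rewrite -(ler_expR) in hx. have := expR_ge0 (- ((t + 1) ^+ 2) / 2).
  nra.
Qed.

Local Close Scope ereal_scope.
Local Open Scope ring_scope.

Lemma bigsetI_mem (T : Type) (s : seq nat) (S : nat -> set T) (w : T) :
  (\big[setI/setT]_(i <- s) S i)%classic w <-> (forall i, i \in s -> S i w).
Proof.
elim: s => [|a s IH]; first by rewrite big_nil; split.
rewrite big_cons; split.
  move=> [ha hs] i; rewrite inE => /orP[/eqP -> //|his].
  by apply IH.
move=> h; split; first by apply: h; rewrite mem_head.
by apply/IH => i his; apply: h; rewrite inE his orbT.
Qed.

Lemma max_abs_le d (T : measurableType d) (R : realType)
    (P : probability T R) (xi : nat -> {RV P >-> R}) N w (t : R) : 0 <= t ->
  (max_abs xi N w <= t) = [forall i : 'I_N, `|xi i w| <= t].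
Proof.
move=> t0; rewrite /max_abs; apply/idP/forallP.
  by move/bigmax_leP => [_ h] i; apply: h.
by move=> h; apply/bigmax_leP; split.
Qed.

Lemma max_abs_ge0 d (T : measurableType d) (R : realType)
    (P : probability T R) (xi : nat -> {RV P >-> R}) N w : 0 <= max_abs xi N w.
Proof.
rewrite /max_abs; elim/big_ind: _ => //.
by move=> x y hx hy; rewrite le_max hx.
Qed.

Lemma measurable_bigmax d (T : measurableType d) (R : realType) N :
  forall (F : nat -> T -> R), (forall i, measurable_fun setT (F i)) ->
  measurable_fun setT (fun w => \big[Num.max/0]_(i < N) F i w).
Proof.
elim: N => [|N IH] F mF.
  rewrite (_ : (fun w => _) = cst 0); first exact: measurable_cst.
  by apply/funext => w; rewrite big_ord0.
rewrite (_ : (fun w => _) = (F 0%N) \max (fun w => \big[Num.max/0]_(i < N) F i.+1 w)).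
  apply: measurable_maxr => //. exact: (IH (fun i => F i.+1)).

apply/funext => w; rewrite big_ord_recl /=.
by congr (Num.max _ _); apply: eq_bigr => i _; rewrite lift0.
Qed.

Lemma measurable_max_abs d (T : measurableType d) (R : realType)
    (P : probability T R) (xi : nat -> {RV P >-> R}) N :
  measurable_fun setT (max_abs xi N).
Proof.
rewrite /max_abs; apply: (@measurable_bigmax _ _ R N (fun i w => `|xi i w|)) => i.
apply: measurableT_comp; first exact: normr_measurable.
exact: measurable_funPT.
Qed.

Definition Sset {d} {T : measurableType d} {R : realType}
    {P : probability T R} (xi : nat -> {RV P >-> R}) N (t : R) : set T :=
  (\big[setI/setT]_(i <- iota 0 N) (xi i @^-1` At t))%classic.

Lemma measurable_Sset d (T : measurableType d) (R : realType)
    (P : probability T R) (xi : nat -> {RV P >-> R}) N (t : R) :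
  measurable (Sset xi N t).
Proof.
apply: bigsetI_measurable => i _.
have := @measurable_funPT _ _ _ _ (xi i) measurableT _ (@measurable_At R t).
by rewrite setTI.
Qed.

Lemma SsetE d (T : measurableType d) (R : realType)
    (P : probability T R) (xi : nat -> {RV P >-> R}) N (t : R) w : 0 <= t ->
  Sset xi N t w <-> max_abs xi N w <= t.
Proof.
move=> t0; rewrite /Sset bigsetI_mem max_abs_le //; split.
  move=> h; apply/forallP => i; apply: (h i); by rewrite mem_iota add0n ltn_ord.
move/forallP => h i; rewrite mem_iota add0n => hi.
exact: (h (Ordinal hi)).
Qed.

Lemma PSset d (T : measurableType d) (R : realType)
    (P : probability T R) (xi : nat -> {RV P >-> R}) N (t : R) :
  iid_std_gaussian xi ->
  P (Sset xi N t) = ((fine (normal_prob 0 1 (At t))) ^+ N)%:E.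
Proof.
move=> [hind hg].
rewrite /Sset hind; last 2 first.
- exact: iota_uniq.
- by move=> i _; exact: measurable_At.
have hQ : normal_prob 0 1 (At t) = (fine (normal_prob 0 1 (At t)))%:E.
  by rewrite fineK // fin_num_measure //; exact: measurable_At.
have -> : (\prod_(i <- iota 0 N) P (xi i @^-1` At t)%classic)%E =
          (\prod_(i <- iota 0 N) (fine (normal_prob 0 1 (At t)))%:E)%E.
  apply: eq_bigr => i _; rewrite -hQ.
  by have := hg i (At t) (@measurable_At R t); rewrite /distribution /pushforward.
rewrite big_const_seq count_predT size_iota.
elim: N => [|N IH] //=.
by rewrite IH exprS EFinM.
Qed.

Local Open Scope ereal_scope.

Lemma measurable_F d (T : measurableType d) (R : realType)
    (P : probability T R) (xi : nat -> {RV P >-> R}) N (L : R) :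
  measurable_fun setT (fun w => expR (- (L * max_abs xi N w))).
Proof.
apply: measurableT_comp; first exact: measurable_expR.
apply: (@measurable_funN _ _ _ _ (fun w => L * max_abs xi N w)%R).
apply: measurable_funM => //; exact: measurable_max_abs.
Qed.

Lemma E_lb d (T : measurableType d) (R : realType)
    (P : probability T R) (xi : nat -> {RV P >-> R}) N (L t : R) :
  iid_std_gaussian xi -> (0 <= L)%R -> (0 <= t)%R ->
  (expR (- (L * t)) * (fine (normal_prob 0 1 (At t))) ^+ N)%:E <=
  'E_P[fun w => expR (- (L * max_abs xi N w))].
Proof.
move=> hiid L0 t0.
rewrite EFinM -(@PSset _ _ _ P xi N t hiid) unlock.
rewrite -(setIT (Sset xi N t)) -integral_indic //; last exact: measurable_Sset.
have hi0 : forall x, (setT : set T) x -> 0 <= (\1_(Sset xi N t) x : R)%:E.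
  by move=> x _; rewrite lee_fin indicE; case: (_ \in _).
have hmi : measurable_fun (setT : set T) (fun x => (\1_(Sset xi N t) x : R)%:E).
  apply/measurable_EFinP; apply: measurable_indic; exact: measurable_Sset.
rewrite -ge0_integralZl_EFin // ?expR_ge0 //.
apply: ge0_le_integral => //.
- exact: measurable_funeM.
- apply/measurable_EFinP; exact: measurable_F.
move=> w _; rewrite -EFinM lee_fin indicE.
case: (boolP (w \in _)) => hw; last by rewrite mulr0 expR_ge0.
rewrite mulr1 ler_expR lerN2; apply: ler_wpM2l => //.
by apply/(@SsetE _ _ _ P xi N t w t0); rewrite -inE.
Qed.

Lemma E_ub d (T : measurableType d) (R : realType)
    (P : probability T R) (xi : nat -> {RV P >-> R}) N (L t : R) :
  iid_std_gaussian xi -> (0 <= L)%R -> (0 <= t)%R ->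
  'E_P[fun w => expR (- (L * max_abs xi N w))] <=
  (expR (- (L * t)) + (fine (normal_prob 0 1 (At t))) ^+ N)%:E.
Proof.
move=> hiid L0 t0.
rewrite EFinD -(@PSset _ _ _ P xi N t hiid) unlock.
rewrite -(setIT (Sset xi N t)) -integral_indic //; last exact: measurable_Sset.
rewrite -[X in X + _](mule1 (expR (- (L * t)))%:E) -(probability_setT P).
rewrite -integral_cst //.
have hi0 : forall x, (setT : set T) x -> 0 <= (\1_(Sset xi N t) x : R)%:E.
  by move=> x _; rewrite lee_fin indicE; case: (_ \in _).
have hmi : measurable_fun (setT : set T) (fun x => (\1_(Sset xi N t) x : R)%:E).
  apply/measurable_EFinP; apply: measurable_indic; exact: measurable_Sset.
rewrite -ge0_integralD //; try by move=> x _; rewrite lee_fin expR_ge0.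
apply: ge0_le_integral => //.
- apply/measurable_EFinP; exact: measurable_F.
- apply: emeasurable_funD; first exact: measurable_cst.
  apply/measurable_EFinP; apply: measurable_indic; exact: measurable_Sset.
move=> w _; rewrite /= -EFinD lee_fin indicE.
case: (boolP (w \in _)) => hw.
  apply: (@le_trans _ _ 1%R).
    rewrite -[leRHS]expR0 ler_expR oppr_le0 mulr_ge0 //; exact: max_abs_ge0.
  by rewrite lerDr expR_ge0.
rewrite addr0 ler_expR lerN2; apply: ler_wpM2l => //.
have : ~ (max_abs xi N w <= t)%R.
  by move=> h; move/negP: hw; apply; rewrite inE; apply/(@SsetE _ _ _ P xi N t w t0).
by move/negP; rewrite -ltNge => /ltW.
Qed.

Local Close Scope ereal_scope.
Local Open Scope ring_scope.

Definition Q {R : realType} (t : R) : R := fine (normal_prob 0 1 (At t)).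

Lemma QE (R : realType) (t : R) : normal_prob 0 1 (At t) = (Q t)%:E.
Proof. by rewrite /Q fineK // fin_num_measure //; exact: measurable_At. Qed.

Lemma QCE (R : realType) (t : R) : normal_prob 0 1 (~` At t) = (1 - Q t)%:E.
Proof.
have := @probability_setC _ _ R (normal_prob (0:R) 1) _ (@measurable_At R t).
move=> h; apply: (eq_trans h); rewrite EFinB; congr (_ - _)%E; exact: QE.
Qed.

Lemma Q_ge0 (R : realType) (t : R) : 0 <= Q t.
Proof. rewrite -lee_fin -QE; exact: measure_ge0. Qed.

Lemma Q_ub1 (R : realType) (t : R) : 0 <= t -> Q t <= t.
Proof. by move=> t0; rewrite -lee_fin -QE; apply: G1. Qed.

Lemma Q_lb (R : realType) (t : R) : 0 <= t -> 1 - 2 * expR (- (t ^+ 2) / 4) <= Q t.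
Proof.
move=> t0; have := @G2 R t t0; rewrite QCE lee_fin. lra.
Qed.

Lemma Q_ub2 (R : realType) (t : R) : 0 <= t -> Q t <= 1 - 3^-1 * expR (- ((t + 1) ^+ 2) / 2).
Proof.
move=> t0; have := @G3 R t t0; rewrite QCE lee_fin. lra.
Qed.

Lemma fine_bounds (R : realType) (x : \bar R) (a b : R) :
  (a%:E <= x)%E -> (x <= b%:E)%E -> a <= fine x <= b.
Proof. by case: x => [r| |] //= h1 h2; rewrite -!lee_fin h1 h2. Qed.

Lemma fine_lb (R : realType) (x : \bar R) (a : R) (b : R) :
  (a%:E <= x)%E -> (x <= b%:E)%E -> a <= fine x.
Proof. by move=> h1 h2; case/andP: (@fine_bounds R x a b h1 h2). Qed.

Lemma fine_ub (R : realType) (x : \bar R) (a : R) (b : R) :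
  (a%:E <= x)%E -> (x <= b%:E)%E -> fine x <= b.
Proof. by move=> h1 h2; case/andP: (@fine_bounds R x a b h1 h2). Qed.

Lemma comb (R : realType) (L x y g : R) : 1 <= L -> x <= g -> y <= g ->
  expR x + expR y <= expR g -> expR (L * x) + expR (L * y) <= expR (L * g).
Proof.
move=> L1 xg yg h.
have ex : expR (L * x) <= expR (L * g) * expR (x - g).
  rewrite -expRD ler_expR. nra.
have ey : expR (L * y) <= expR (L * g) * expR (y - g).
  rewrite -expRD ler_expR. nra.
have e1 : expR (x - g) + expR (y - g) <= 1.
  rewrite !expRD -mulrDl expRN.
  have eg := expR_gt0 g.
  by rewrite ler_pdivrMr // mul1r.
have := expR_gt0 (L * g). nra.
Qed.

Local Close Scope ereal_scope.
Local Open Scope ring_scope.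

Lemma u_ge2 {R : realType} (L : R) (N : nat) : 0 < L -> 2 * L <= N%:R -> 2 <= N%:R / L.
Proof. by move=> L0 h; rewrite ler_pdivlMr. Qed.

Lemma NuE {R : realType} (L : R) (N : nat) : 0 < L -> N%:R = L * (N%:R / L).
Proof. move=> L0; rewrite mulrC divfK //; exact: lt0r_neq0. Qed.

Lemma expR_le_inv {R : realType} (x : R) : x < 1 -> expR x <= (1 - x)^-1.
Proof.
move=> x1; have := expR_ge1Dx (- x); rewrite expRN => h.
have ex := expR_gt0 x.
rewrite -(invrK (expR x)) lef_pV2 ?posrE ?invr_gt0 // ?subr_gt0 //; lra.
Qed.

Lemma ln_u_lb {R : realType} (u : R) : 2 <= u -> 4 / 9 <= ln u.
Proof.
move=> u2.
have h : expR (4 / 9) <= u.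
  apply: (le_trans (@expR_le_inv R (4/9) _)); first lra.
  apply: le_trans _ u2. rewrite (_ : 1 - 4/9 = 5/9 :> R); last lra. rewrite invf_div. lra.
rewrite -[X in X <= _](expRK (4/9)) ler_ln // posrE ?expR_gt0 //; lra.
Qed.

Lemma s_lb {R : realType} (u : R) : 2 <= u -> 2 / 3 <= Num.sqrt (ln u).
Proof.
move=> u2; apply: le_sqrt_l; first lra.
have := @ln_u_lb _ u u2. lra.
Qed.

Lemma s_sq {R : realType} (u : R) : 2 <= u -> Num.sqrt (ln u) ^+ 2 = ln u.
Proof. move=> u2; rewrite sqr_sqrtr //; have := @ln_u_lb _ u u2; lra. Qed.

Lemma u_exp {R : realType} (u : R) : 2 <= u -> expR (Num.sqrt (ln u) ^+ 2) = u.
Proof. move=> u2; rewrite s_sq // lnK // posrE; lra. Qed.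

Lemma exp_pow {R : realType} (a : R) (N : nat) : expR a ^+ N = expR (N%:R * a).
Proof. by rewrite expRM_natl. Qed.

Lemma QN_lb {R : realType} (L : R) (N : nat) : 0 < L -> 2 * L <= N%:R ->
  expR (- (2 * L)) <= Q (3 * Num.sqrt (ln (N%:R / L))) ^+ N.
Proof.
move=> L0 h.
set u := N%:R / L. have u2 : 2 <= u by apply: u_ge2.
set s := Num.sqrt (ln u).
have s0 : 0 <= s by apply: sqrtr_ge0.
have lnu := @ln_u_lb _ u u2.
have ssq : s ^+ 2 = ln u by apply: s_sq.
have t0 : 0 <= 3 * s by lra.
have hq := @Q_lb R _ t0.
have hui : u^-1 = expR (- ln u) by rewrite expRN lnK // posrE; lra.
have htail : 2 * expR (- ((3 * s) ^+ 2) / 4) <= u^-1.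
  rewrite hui.
  have -> : - ln u = - ((3 * s) ^+ 2) / 4 + 5 / 4 * ln u.
    rewrite exprMn ssq. lra.
  rewrite expRD.
  have : u <= expR (5 / 4 * ln u).
    rewrite -[X in X <= _]lnK ?posrE; last lra.
    rewrite ler_expR. lra.
  have := expR_gt0 (- (3 * s) ^+ 2 / 4). nra.
set x := u^-1.
have x0 : 0 < x by rewrite invr_gt0; lra.
have x2 : x <= 2^-1 by rewrite lef_pV2 ?posrE; lra.
have h1x : expR (- (2 * x)) <= 1 - x.
  rewrite expRN.
  have := expR_ge1Dx (2 * x). have := expR_gt0 (2 * x) => e0 e1.
  rewrite -div1r ler_pdivrMr //.
  have p1 : 0 <= (1 - x) * (expR (2 * x) - (1 + 2 * x)) by apply: mulr_ge0; lra.
  have p2 : 0 <= x * (1 - 2 * x) by apply: mulr_ge0; lra.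
  nra.
have hQ : expR (- (2 * x)) <= Q (3 * s).
  apply: (le_trans h1x). rewrite /x. lra.
have -> : - (2 * L) = N%:R * (- (2 * x)).
  rewrite /x /u invf_div. field. apply/eqP => hN.
  move: h; rewrite hN. lra.
rewrite -exp_pow. apply: lerXn2r => //; rewrite nnegrE ?expR_ge0 //.
apply: le_trans hQ; exact: expR_ge0.
Qed.

Local Close Scope ereal_scope.
Local Open Scope ring_scope.

Definition EE {d} {T : measurableType d} {R : realType} {P : probability T R}
  (xi : nat -> {RV P >-> R}) (N : nat) (L : R) : R :=
  fine ('E_P[fun w => expR (- (L * max_abs xi N w))])%E.

Lemma EE_ub d (T : measurableType d) (R : realType)
    (P : probability T R) (xi : nat -> {RV P >-> R}) N (L t : R) :
  iid_std_gaussian xi -> 0 <= L -> 0 <= t ->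
  EE xi N L <= expR (- (L * t)) + Q t ^+ N.
Proof.
move=> hiid L0 t0.
apply: (@fine_ub _ _ (expR (- (L * t)) * Q t ^+ N)).
  exact: E_lb.
exact: E_ub.
Qed.

Lemma EE_lb d (T : measurableType d) (R : realType)
    (P : probability T R) (xi : nat -> {RV P >-> R}) N (L t : R) :
  iid_std_gaussian xi -> 0 <= L -> 0 <= t ->
  expR (- (L * t)) * Q t ^+ N <= EE xi N L.
Proof.
move=> hiid L0 t0.
apply: (@fine_lb _ _ _ (expR (- (L * t)) + Q t ^+ N)).
  exact: E_lb.
exact: E_ub.
Qed.

Lemma lowerE d (T : measurableType d) (R : realType)
    (P : probability T R) (xi : nat -> {RV P >-> R}) N (L : R) :
  iid_std_gaussian xi -> 0 < L -> 2 * L <= N%:R ->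
  expR (- (L * (3 * Num.sqrt (ln (N%:R / L))) + 2 * L)) <= EE xi N L.
Proof.
move=> hiid L0 h.
have s0 := sqrtr_ge0 (ln (N%:R / L)).
apply: le_trans (@EE_lb _ _ _ P xi N L (3 * Num.sqrt (ln (N%:R / L))) hiid (ltW L0) _); last lra.
rewrite opprD expRD ler_pM2l ?expR_gt0 //.
exact: QN_lb.
Qed.

Lemma part1 d (T : measurableType d) (R : realType)
    (P : probability T R) (xi : nat -> {RV P >-> R}) N (L : R) :
  iid_std_gaussian xi -> 0 < L -> 2 * L <= N%:R ->
  - ln (EE xi N L) <= 6 * L * Num.sqrt (ln (N%:R / L)).
Proof.
move=> hiid L0 h.
have hl := @lowerE _ _ _ P xi N L hiid L0 h.
have s23 := @s_lb R _ (@u_ge2 R L N L0 h).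
set s := Num.sqrt (ln (N%:R / L)) in hl s23 *.
have hp : 0 < EE xi N L by apply: lt_le_trans hl; exact: expR_gt0.
have : - (L * (3 * s) + 2 * L) <= ln (EE xi N L).
  by rewrite -[X in X <= _]expRK ler_ln // posrE expR_gt0.
nra.
Qed.

Lemma part2A d (T : measurableType d) (R : realType)
    (P : probability T R) (xi : nat -> {RV P >-> R}) N (L : R) :
  iid_std_gaussian xi -> 1 <= L -> 2 * L <= N%:R ->
  EE xi N L <= expR (L * (- (1 / 8))).
Proof.
move=> hiid L1 h.
have L0 : 0 <= L by lra.
have t0 : (0:R) <= 1 / 4 by lra.
apply: le_trans (@EE_ub _ _ _ P xi N L (1/4) hiid L0 t0) _.
set a : R := ln 4.
have ea : expR (- a) = 1 / 4 by rewrite expRN lnK ?posrE // div1r.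
have a0 : 0 <= a by rewrite /a; apply: ltW; apply: ln_gt0; lra.
have hq : Q (1/4 : R) ^+ N <= expR (L * (- (2 * a))).
  apply: (@le_trans _ _ ((1/4) ^+ N)).
    by apply: lerXn2r; rewrite ?nnegrE ?Q_ge0 //; last exact: Q_ub1.
  rewrite -ea exp_pow ler_expR.
  have : 0 <= (N%:R - 2 * L) * a by apply: mulr_ge0; lra.
  nra.
have e2a : expR (- (2 * a)) = 1 / 16.
  have -> : - (2 * a) = - a + - a by lra.
  rewrite expRD ea. lra.
have e14 : expR (- (1 / 4)) <= 4 / 5 :> R.
  rewrite expRN. have := expR_ge1Dx (1 / 4 : R). have := expR_gt0 (1/4 : R) => e0 e1.
  rewrite -div1r ler_pdivrMr //. lra.
have e18 : 7 / 8 <= expR (- (1 / 8)) :> R.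
  have := expR_ge1Dx (- (1 / 8) : R). lra.
have ya : - (2 * a) <= - (1 / 8).
  rewrite -ler_expR e2a. lra.
have := @comb R L (- (1 / 4)) (- (2 * a)) (- (1 / 8)) L1 ltac:(lra) ya ltac:(lra).
rewrite (_ : L * - (1 / 4) = - (L * (1 / 4))); last lra.
lra.
Qed.

Lemma part2B d (T : measurableType d) (R : realType)
    (P : probability T R) (xi : nat -> {RV P >-> R}) N (L : R) :
  iid_std_gaussian xi -> 1 <= L -> 2 * L <= N%:R ->
  4 <= Num.sqrt (ln (N%:R / L)) ->
  EE xi N L <= expR (L * (- (Num.sqrt (ln (N%:R / L)) / 4))).
Proof.
move=> hiid L1 h s4.
have L0 : 0 < L by lra.
have u2 := @u_ge2 R L N L0 h.
have uE := @u_exp R _ u2.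
have NE := @NuE R L N L0.
set u := N%:R / L in u2 uE NE s4 *.
set s := Num.sqrt (ln u) in uE s4 *.
have t0 : 0 <= s / 2 by lra.
apply: le_trans (@EE_ub _ _ _ P xi N L (s / 2) hiid (ltW L0) t0) _.
set p0 := 3^-1 * expR (- ((s / 2 + 1) ^+ 2) / 2).
have hq1 := @Q_ub2 R (s / 2) t0.
have hq2 : Q (s / 2) <= expR (- p0).
  apply: (le_trans hq1). have := expR_ge1Dx (- p0). rewrite /p0. lra.
have hup : s / 2 <= u * p0.
  rewrite -uE /p0 mulrCA -expRD.
  have := expR_ge1Dx (s ^+ 2 + - (s / 2 + 1) ^+ 2 / 2). nra.
have hq : Q (s / 2) ^+ N <= expR (L * (- (u * p0))).
  apply: (@le_trans _ _ (expR (- p0) ^+ N)).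
    by apply: lerXn2r; rewrite ?nnegrE ?Q_ge0 ?expR_ge0.
  rewrite exp_pow NE ler_expR. lra.
have hsum : expR (- (s / 2)) + expR (- (u * p0)) <= expR (- (s / 4)).
  have e1 : expR (- (u * p0)) <= expR (- (s / 2)) by rewrite ler_expR; lra.
  have -> : - (s / 4) = - (s / 2) + s / 4 by lra.
  rewrite expRD. have := expR_ge1Dx (s / 4). have := expR_gt0 (- (s / 2)). nra.
have := @comb R L (- (s / 2)) (- (u * p0)) (- (s / 4)) L1 ltac:(lra) ltac:(lra) hsum.
rewrite (_ : L * - (s / 2) = - (L * (s / 2))); last lra.
lra.
Qed.

Theorem lemma6 (d : measure_display) (T : measurableType d) (R : realType)
    (P : probability T R) (xi : nat -> {RV P >-> R}) :
  iid_std_gaussian xi ->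
  (exists c1 : R, 0 < c1 /\
    forall (L : R) (N : nat), 0 < L -> (1 <= N)%N -> 2 * L <= N%:R ->
      - ln (fine 'E_P[fun w => expR (- (L * max_abs xi N w))])
        <= c1 * L * Num.sqrt (ln (N%:R / L))) /\
  (exists c2 : R, 0 < c2 /\
    forall (L : R) (N : nat), 1 <= L -> (1 <= N)%N -> 2 * L <= N%:R ->
      - ln (fine 'E_P[fun w => expR (- (L * max_abs xi N w))])
        >= c2 * L * Num.sqrt (ln (N%:R / L))).
Proof.
move=> hiid; split.
  exists 6; split; first lra.
  move=> L N L0 _ h.
  exact: (@part1 _ _ _ P xi N L hiid L0 h).
exists (1 / 32); split; first lra.
move=> L N L1 _ h.
have L0 : 0 < L by lra.
have hl := @lowerE _ _ _ P xi N L hiid L0 h.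
have hp : 0 < EE xi N L by apply: lt_le_trans hl; exact: expR_gt0.
have s0 := sqrtr_ge0 (ln (N%:R / L)).
change (1 / 32 * L * Num.sqrt (ln (N%:R / L)) <= - ln (EE xi N L)).
case: (leP (Num.sqrt (ln (N%:R / L))) 4) => hs.
  have hA := @part2A _ _ _ P xi N L hiid L1 h.
  have : ln (EE xi N L) <= L * (- (1 / 8)).
    by rewrite -[X in _ <= X]expRK ler_ln // posrE expR_gt0.
  have : 0 <= L * (4 - Num.sqrt (ln (N%:R / L))) by apply: mulr_ge0; lra.
  nra.
have hB := @part2B _ _ _ P xi N L hiid L1 h (ltW hs).
have : ln (EE xi N L) <= L * (- (Num.sqrt (ln (N%:R / L)) / 4)).
  by rewrite -[X in _ <= X]expRK ler_ln // posrE expR_gt0.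
have : 0 <= L * Num.sqrt (ln (N%:R / L)) by apply: mulr_ge0; lra.
nra.
Qed.
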